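(* Let $0<q<1$ and $q^*=2-q$. Let $X_1,X_2,\dots,X_n$ be i.i.d. real random variables. Then for all real $x$ and all $a>0$ with $(1-q)ax<1$, $$\mathrm{Prob}\left(\frac1n\sum_{k=1}^nX_k\ge x\right)\le\left[\exp_q(-ax)\right]^nA^n(a),\qquad A(a)=\mathbb{E}\exp_{q^*}(aX_1).$$
   Context: For $q\in(0,2)$, $q\ne1$, the $q$-deformed exponential is $\exp_q(u)=[1+(1-q)u]_+^{1/(1-q)}$ for real $u$ (value in $[0,+\infty]$), where $[u]_+=\max(u,0)$. *)

(* Defs.v *)
From HB Require Import structures.
From mathcomp Require Import all_boot all_order all_algebra.
From mathcomp Require Import all_classical all_reals all_analysis.
Set Implicit Arguments. Unset Strict Implicit. Unset Printing Implicit Defensive.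
Import Order.TTheory GRing.Theory Num.Theory.
Import numFieldNormedType.Exports.
Local Open Scope classical_set_scope.
Local Open Scope ring_scope.

(* q-deformed exponential exp_q(u) = [1+(1-q)u]_+^{1/(1-q)}, valued in [0,+oo].
   Convention: 0^e = 0 for e > 0 and 0^e = +oo for e < 0. *)
Definition expq (R : realType) (q u : R) : \bar R :=
  let b := 1 + (1 - q) * u in
  if 0 < b then ((b `^ (1 - q)^-1)%R)%:E
  else if 0 < 1 - q then 0%E else (+oo)%E.

Definition mutually_independent d (T : measurableType d) (R : realType)
  (P : probability T R) (n : nat) (X : nat -> T -> R) : Prop :=
  forall B : nat -> set R, (forall i, measurable (B i)) ->
    P (\bigcap_(i in [set i | (i < n)%N]) (X i @^-1` B i)) =
    (\prod_(i < n) P (X i @^-1` B i))%E.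

Definition identically_distributed d (T : measurableType d) (R : realType)
  (P : probability T R) (n : nat) (X : nat -> T -> R) : Prop :=
  forall i, (i < n)%N -> forall B : set R, measurable B ->
    P (X i @^-1` B) = P (X 0%N @^-1` B).

(* Main.v *)
Require Import Defs.
From HB Require Import structures.
From mathcomp Require Import all_boot all_order all_algebra.
From mathcomp Require Import all_classical all_reals all_analysis.
From mathcomp Require Import measurable_realfun.
From mathcomp Require Import ring lra.
Import Order.TTheory GRing.Theory Num.Theory.
Import numFieldNormedType.Exports.
Local Open Scope classical_set_scope.
Local Open Scope ring_scope.

Import HBNNSimple.
Section aux.
Context d (T : measurableType d) (R : realType) (mu : {measure set T -> \bar R}).
Local Open Scope ereal_scope.
Lemma le_integral_nm (f1 f2 : T -> \bar R) : (forall x, 0 <= f1 x) ->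
  (forall x, f1 x <= f2 x) -> \int[mu]_x f1 x <= \int[mu]_x f2 x.
Proof.
move=> f10 f12; rewrite !ge0_integralTE //; last by move=> x; apply: le_trans (f12 x).
apply: ereal_sup_le => _ [h /= hf <-]; exists h => //= x.
exact: le_trans (f12 x).
Qed.

Lemma integral_comp_nnsfun (Y : {mfun T >-> R}) (s : {nnsfun R >-> R}) :
  \int[mu]_w (s (Y w))%:E =
  \sum_(r \in range s) r%:E * mu (Y @^-1` (s @^-1` [set r])).
Proof.
transitivity (\int[mu]_w (\sum_(r \in range s)
   (r * \1_(Y @^-1` (s @^-1` [set r])) w)%:E)).
  apply: eq_integral => w _; rewrite fimfunE fsumEFin //.
rewrite ge0_integral_fsum //; last 2 first.
- move=> r; apply/measurable_EFinP; apply: measurable_funM.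
    exact: measurable_cst.
  apply: measurable_indic; apply: measurable_funPTI.
  exact: measurable_sfunP.
- move=> r w _; rewrite lee_fin; have [r0|r0] := ltP r 0%R.
    by rewrite preimage_nnfun0 // preimage_set0 indic0 mulr0.
  by rewrite mulr_ge0.
apply: eq_fsbigr => r _.
rewrite (@integralZl_indic _ _ _ _ _ measurableT
   (fun r => Y @^-1` (s @^-1` [set r]))) //.
- by rewrite integral_indic ?setIT //; apply: measurable_funPTI; exact: measurable_sfunP.
- by move=> r0; rewrite /= preimage_nnfun0 // preimage_set0.
- by apply: measurable_funPTI; exact: measurable_sfunP.
Qed.
End aux.

Definition slot (R : realType) (m : nat) (t : nat -> {nnsfun R >-> R})
  (B : nat -> set R) (i : nat) (y : R) : R :=
  if (i < m)%N then t i y else \1_(B i) y.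
Arguments slot {R}.

Section indep.
Context d (T : measurableType d) (R : realType) (P : probability T R)
  (n : nat) (hn : (0 < n)%N) (X : nat -> {mfun T >-> R}).
Hypothesis hind : mutually_independent P n (fun i => X i).
Local Open Scope ereal_scope.
Implicit Types (t : nat -> {nnsfun R >-> R}) (B : nat -> set R) (y : R).

Lemma slot_ge0 m t B i y : (0 <= slot m t B i y)%R.
Proof. by rewrite /slot; case: ifP. Qed.

Lemma slot_meas m t B i : measurable (B i) -> measurable_fun setT (slot m t B i).
Proof.
move=> mB.
have -> : slot m t B i = if (i < m)%N then (t i : R -> R) else \1_(B i).
  by apply/funext => y; rewrite /slot; case: ifP.
case: ifP => _; first exact: (measurable_funP (t i)).
exact: measurable_indic.
Qed.

Lemma prod_meas m t B : (forall i, measurable (B i)) ->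
  measurable_fun setT (fun w => \prod_(i < n) slot m t B i (X i w))%R.
Proof.
move=> mB; apply: measurable_prod => i _.
apply: measurableT_comp; first exact: slot_meas.
exact: (measurable_funP (X i)).
Qed.

Lemma slot_prod m : forall t B, (forall i, measurable (B i)) ->
  \int[P]_w (\prod_(i < n) slot m t B i (X i w))%:E =
  \prod_(i < n) \int[P]_w (slot m t B i (X i w))%:E.
Proof.
elim: m => [|m IH] t B mB.
  pose C := \bigcap_(i in [set i | (i < n)%N]) (X i @^-1` B i).
  have mC : measurable C.
    apply: bigcap_measurable; first by exists 0%N.
    by move=> i _; apply: measurable_funPTI.
  transitivity (\int[P]_w (\1_C w)%:E).
    apply: eq_integral => w _; congr EFin; rewrite /slot /= indicE.
    case: (boolP (w \in C)) => wC.
      apply: big1 => i _; rewrite indicE.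
      move/set_mem: wC => /(_ i (ltn_ord i)) Bi.
      by rewrite mem_set.
    have [i /= [hi nBi]] : exists i, (i < n)%N /\ ~ B i (X i w).
      apply/not_existsP => hall; move: wC => /negP; apply; apply/mem_set => i hi.
      by have := hall i; move/not_andP => [//|/contrapT].
    rewrite (bigD1 (Ordinal hi)) //= indicE memNset // mul0r //.
  rewrite integral_indic // setIT /C; etransitivity; first exact: hind.
  apply: eq_bigr => i _.
  rewrite /slot /=.
  transitivity (\int[P]_w (\1_(X i @^-1` B i) w)%:E) => //.
  by rewrite integral_indic ?setIT //; apply: measurable_funPTI.
have [nm|mn] := leqP n m.
  have E i : (i < n)%N -> slot m.+1 t B i = slot m t B i.
    move=> hi; rewrite /slot (leq_trans hi nm) (leq_trans hi (leqW nm)) //.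
  transitivity (\int[P]_w (\prod_(i < n) slot m t B i (X i w))%:E).
    by apply: eq_integral => w _; congr EFin; apply: eq_bigr => i _; rewrite E.
  rewrite IH //; apply: eq_bigr => i _; rewrite E //.
pose im := Ordinal mn.
pose Br r := fun i => if i == m then t m @^-1` [set r] else B i.
have mBr r i : measurable (Br r i).
  by rewrite /Br; case: ifP => _ //; exact: measurable_sfunP.
have neqm (i : 'I_n) : i != im -> (i : nat) != m.
  by apply: contra => /eqP h; apply/eqP/val_inj.
have Eneq r (i : nat) : i != m -> slot m t (Br r) i = slot m.+1 t B i.
  move=> hi; apply/funext => y.
  rewrite /slot /Br /=; case: (ltnP i m) => him.
    by rewrite ltnS (ltnW him).
  have hmi : (m < i)%N by rewrite ltn_neqAle him andbT eq_sym.
  rewrite ltnS leqNgt hmi /=.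
  by case: eqP => // him'; move: hi; rewrite him' eqxx.
have Em r : slot m t (Br r) m = \1_(t m @^-1` [set r]).
  by apply/funext => y; rewrite /slot ltnn /Br /= eqxx.
have Em' : slot m.+1 t B m = t m by apply/funext => y; rewrite /slot ltnSn.
have hprod r w : (\prod_(i < n) slot m t (Br r) i (X i w) =
    \1_(t m @^-1` [set r]) (X m w) *
    \prod_(i < n | i != im) slot m.+1 t B i (X i w))%R.
  rewrite (bigD1 im) //= Em; congr (_ * _)%R; apply: eq_bigr => i hi.
  by rewrite Eneq // neqm.
have pw w : (\prod_(i < n) slot m.+1 t B i (X i w))%:E =
    \sum_(r \in range (t m)) r%:E * (\prod_(i < n) slot m t (Br r) i (X i w))%:E.
  rewrite (bigD1 im) //= Em' fimfunE mulr_fsuml fsumEFin //.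
  by congr EFin; apply: eq_fsbigr => r _; rewrite hprod mulrA.
have p0 r w : (r < 0)%R -> (\prod_(i < n) slot m t (Br r) i (X i w) = 0)%R.
  by move=> r0; rewrite hprod preimage_nnfun0 // indic0 mul0r.
have pge0 r w : (0 <= \prod_(i < n) slot m t (Br r) i (X i w))%R.
  by apply: prodr_ge0 => i _; exact: slot_ge0.
pose K := \prod_(i < n | i != im) \int[P]_w (slot m.+1 t B i (X i w))%:E.
pose pr r := P (X m @^-1` (t m @^-1` [set r])).
have prge0 r : 0 <= r%:E * pr r.
  have [r0|r0] := ltP r 0%R.
    by rewrite /pr preimage_nnfun0 // preimage_set0 measure0 mule0.
  by apply: mule_ge0.
have Iprod r : \int[P]_w (\prod_(i < n) slot m t (Br r) i (X i w))%:E = pr r * K.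
  rewrite IH // (bigD1 im) //= Em; congr (_ * _).
    transitivity (\int[P]_w (\1_(X m @^-1` (t m @^-1` [set r])) w)%:E) => //.
    by rewrite integral_indic ?setIT //; apply: measurable_funPTI; exact: measurable_sfunP.
  by apply: eq_bigr => i hi; rewrite Eneq // neqm.
have Hr r : \int[P]_w (r%:E * (\prod_(i < n) slot m t (Br r) i (X i w))%:E) =
    r%:E * (pr r * K).
  have [r0|r0] := ltP r 0%R.
    rewrite /pr preimage_nnfun0 // preimage_set0 measure0 mul0e mule0.
    by apply: integral0_eq => w _; rewrite p0 // mule0.
  rewrite ge0_integralZl_EFin // ?Iprod //.
  - by move=> w _; rewrite lee_fin.
  - by apply/measurable_EFinP; exact: prod_meas.
transitivity (\int[P]_w (\sum_(r \in range (t m))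
    r%:E * (\prod_(i < n) slot m t (Br r) i (X i w))%:E)).
  by apply: eq_integral => w _; exact: pw.
rewrite ge0_integral_fsum //; last 2 first.
- move=> r; apply/measurable_EFinP => /=.
  apply: measurable_funM; first exact: measurable_cst.
  exact: prod_meas.
- move=> r w _; have [r0|r0] := ltP r 0%R.
    by rewrite p0 // mule0.
  by rewrite -EFinM lee_fin mulr_ge0.
under eq_fsbigr do rewrite Hr.
rewrite (bigD1 im) //= Em' integral_comp_nnsfun.
rewrite !fsbig_finite //= ge0_sume_distrl //.
by apply: eq_bigr => r _; rewrite muleA.
Qed.

Lemma prod_same (s : {nnsfun R >-> R}) :
  \int[P]_w (\prod_(i < n) s (X i w))%:E = \prod_(i < n) \int[P]_w (s (X i w))%:E.
Proof.
have := @slot_prod n (fun _ => s) (fun _ => setT) (fun _ => measurableT).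
by rewrite /slot; under eq_integral do under eq_bigr do rewrite ltn_ord;
  under eq_bigr do rewrite ltn_ord.
Qed.

Hypothesis hid : identically_distributed P n (fun i => X i).

Lemma same_int (s : {nnsfun R >-> R}) i : (i < n)%N ->
  \int[P]_w (s (X i w))%:E = \int[P]_w (s (X 0%N w))%:E.
Proof.
move=> hi; rewrite !integral_comp_nnsfun; apply: eq_fsbigr => r _.
by congr (_ * _); apply: hid => //; exact: measurable_sfunP.
Qed.

Lemma prod_le_pow k (F : nat -> \bar R) c :
  (forall i, (i < k)%N -> 0 <= F i <= c) -> \prod_(i < k) F i <= c ^+ k.
Proof.
elim: k => [|k IH] hF; first by rewrite big_ord0 expe0.
rewrite big_ord_recr expeS muleC; apply: lee_pmul => //.
- by apply: prode_ge0 => i _; case/andP: (hF i (leqW (ltn_ord i))).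
- by case/andP: (hF k (ltnSn k)).
- by apply: IH => i hi; apply: hF; exact: leqW.
- by case/andP: (hF k (ltnSn k)).
Qed.

Lemma prod_le (f : R -> R) : measurable_fun setT f -> (forall y, (0 <= f y)%R) ->
  \int[P]_w (\prod_(i < n) f (X i w))%:E <= (\int[P]_w (f (X 0%N w))%:E) ^+ n.
Proof.
move=> mf f0.
have mEf : measurable_fun setT (EFin \o f) by apply/measurable_EFinP.
have [g [ndg cvgg]] := @approximation _ R R setT measurableT (EFin \o f) mEf
  (fun y _ => eq_ind _ is_true (f0 y) _ (esym (lee_fin _ _))).
have cvgr y : g^~ y @ \oo --> f y by exact: fine_cvg (cvgg y I).
have gf j y : (g j y <= f y)%R.
  rewrite -(cvg_lim _ (cvgr y)) //; apply: nondecreasing_cvgn_le.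
    by move=> a b ab; exact/lefP/ndg.
  by apply/cvg_ex; eexists; exact: cvgr.
pose G j w := (\prod_(i < n) g j (X i w))%:E.
have Gm j : measurable_fun setT (G j).
  apply/measurable_EFinP; apply: measurable_prod => i _.
  exact: measurableT_comp (measurable_funP (g j)) (measurable_funP (X i)).
have G0 j w : 0 <= G j w.
  by rewrite lee_fin; apply: prodr_ge0 => i _.
have Gnd w : nondecreasing_seq (G ^~ w).
  move=> a b ab; rewrite lee_fin; apply: ler_prod => i _.
  by apply/andP; split; [exact: fun_ge0|exact/lefP/ndg].
have lim w : limn (G ^~ w) = (\prod_(i < n) f (X i w))%:E.
  apply/cvg_lim => //; apply/fine_cvgP; split; first exact: nearW.
  rewrite /G /comp /=.
  apply: (@cvg_big R 'I_n *%R 1%R xpredT mul_continuous nat \oo (index_enum _)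
    (fun i j => g j (X i w)) (fun i => f (X i w))) => //.
have -> : \int[P]_w (\prod_(i < n) f (X i w))%:E = \int[P]_w (limn (G ^~ w)).
  by apply: eq_integral => w _; rewrite lim.
rewrite monotone_convergence //; apply: lime_le.
  apply: ereal_nondecreasing_is_cvgn => a b ab.
  by apply: ge0_le_integral => // w _; exact: Gnd.
apply: nearW => j; rewrite /G prod_same.
apply: (@prod_le_pow n (fun i => \int[P]_w (g j (X i w))%:E)) => i hi.
rewrite integral_ge0 /=; last by move=> w _; rewrite lee_fin.
rewrite same_int //; apply: ge0_le_integral => //.
- by move=> w _; rewrite lee_fin.
- apply/measurable_EFinP.
  exact: measurableT_comp (measurable_funP (g j)) (measurable_funP (X 0%N)).
- apply/measurable_EFinP; exact: measurableT_comp mf (measurable_funP (X 0%N)).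
- by move=> w _; rewrite lee_fin gf.
Qed.

End indep.
Lemma prod_powR (R : realType) (I : Type) (s : seq I) (F : I -> R) p :
  (forall i, 0 <= F i) -> \prod_(i <- s) (F i `^ p) = (\prod_(i <- s) F i) `^ p.
Proof.
move=> F0; elim: s => [|i s IH]; first by rewrite !big_nil powR1.
rewrite !big_cons IH powRM //; exact: prodr_ge0.
Qed.

Lemma pointwise (R : realType) n (hn : (0 < n)%N) (c x p : R) (hc : 0 < c)
  (hp : 0 <= p) (hb : 0 < 1 - c * x) (Y : 'I_n -> R)
  (hY : forall i, 0 < 1 - c * Y i) (hm : x <= n%:R^-1 * \sum_(i < n) Y i) :
  1 <= ((1 - c * x) `^ p) ^+ n * \prod_(i < n) (1 - c * Y i) `^ (- p).
Proof.
set b := 1 - c * x.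
pose U := fun i => 1 - c * Y i.
have U0 i : 0 <= U i by exact: ltW (hY i).
have -> : \prod_(i < n) (1 - c * Y i) `^ (- p) = ((\prod_(i < n) U i) `^ p)^-1.
  rewrite -prod_powR // -prodfV; apply: eq_bigr => i _; exact: powRN.
have Upos : 0 < \prod_(i < n) U i by apply: prodr_gt0 => i _; exact: hY.
rewrite ler_pdivlMr ?powR_gt0 // mul1r.
have -> : (b `^ p) ^+ n = (b ^+ n) `^ p.
  by rewrite -powR_mulrn ?powR_ge0 // -powRrM mulrC powRrM powR_mulrn // ltW.
apply: ge0_ler_powR => //; rewrite ?nnegrE; [exact: ltW|by rewrite exprn_ge0 // ltW|].
have nR : (0 < n%:R :> R) by rewrite ltr0n.
have := (@leif_AGM R 'I_n predT U (fun i _ => U0 i)).1.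
rewrite cardT size_enum_ord => hle.
apply: le_trans hle _.
have m0 : 0 <= (\sum_(i in predT) U i) / n%:R.
  by apply: divr_ge0; [apply: sumr_ge0 => i _; exact: U0|exact: ltW].
apply: lerXn2r; rewrite ?nnegrE //; first exact: ltW.
set S := \sum_(i < n) Y i in hm.
have -> : \sum_(i in predT) U i = n%:R - c * S.
  rewrite /U /S sumrB mulr_sumr; congr (_ - _).
  by rewrite sumr_const cardT size_enum_ord.
rewrite ler_pdivrMr //.
have : c * x <= c * (n%:R^-1 * S) by rewrite ler_wpM2l // ltW.
rewrite /b; move=> h.
have e : c * (n%:R^-1 * S) * n%:R = c * S by field; rewrite gt_eqF.
nra.
Qed.

Lemma lee_expn (R : realType) (u v : \bar R) k :
  (0 <= u)%E -> (u <= v)%E -> (u ^+ k <= v ^+ k)%E.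
Proof.
move=> u0 uv; elim: k => [|k IH]; first by rewrite !expe0.
rewrite !expeS; apply: lee_pmul => //; exact: expe_ge0.
Qed.

Lemma pinfty_expn (R : realType) k : ((+oo : \bar R) ^+ k.+1 = +oo)%E.
Proof.
elim: k => [|k IH]; first by [].

by rewrite expeS IH mulyy.
Qed.

Theorem proposition3 (d : measure_display) (T : measurableType d) (R : realType)
  (P : probability T R) (q : R) (hq0 : 0 < q) (hq1 : q < 1)
  (n : nat) (hn : (0 < n)%N) (X : nat -> {RV P >-> R})
  (hind : mutually_independent P n (fun i => X i))
  (hid : identically_distributed P n (fun i => X i))
  (x a : R) (ha : 0 < a) (hxa : (1 - q) * a * x < 1) :
  (P [set w | (x <= (n%:R)^-1 * \sum_(k < n) X k w)%R] <=
   (expq q (- (a * x))) ^+ n *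
   (\int[P]_w expq (2 - q) (a * X 0%N w)) ^+ n)%E.
Proof.
pose c := (1 - q) * a.
have hc : 0 < c by rewrite /c mulr_gt0 // subr_gt0.
have hcx : 0 < 1 - c * x by rewrite subr_gt0.
pose p := (1 - q)^-1.
have hp : 0 <= p by rewrite /p invr_ge0 subr_ge0 ltW.
have hg : expq q (- (a * x)) = ((1 - c * x) `^ p)%:E.
  rewrite /expq (_ : 1 + (1 - q) * - (a * x) = 1 - c * x); last by rewrite /c; ring.
  by rewrite hcx.
have hfE y : expq (2 - q) (a * y) =
    if 0 < 1 - c * y then ((1 - c * y) `^ (- p))%:E else +oo%E.
  rewrite /expq (_ : 1 + (1 - (2 - q)) * (a * y) = 1 - c * y); last by rewrite /c; ring.
  rewrite (_ : (1 - (2 - q))^-1 = - p); last by rewrite /p -invrN; congr GRing.inv; ring.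
  by rewrite (_ : (0 < 1 - (2 - q)) = false) //; apply/negbTE; rewrite -leNgt; lra.
pose Good := [set y : R | 0 < 1 - c * y].
have maff : measurable_fun setT (fun y : R => 1 - c * y).
  apply: measurable_funB; first exact: measurable_cst.
  apply: measurable_funM; first exact: measurable_cst.
  exact: measurable_id.
have mGood : measurable Good.
  suff -> : Good = (fun y => 1 - c * y) @^-1` `]0%R, +oo[%classic.
    by rewrite -[X in measurable X]setTI; apply: maff => //; exact: measurable_itv.
  by apply/seteqP; split => y; rewrite /= in_itv /= andbT.
pose ft y := ((1 - c * y) `^ (- p) * \1_Good y)%R.
have ft0 y : 0 <= ft y by rewrite /ft mulr_ge0 // powR_ge0.
have ftm : measurable_fun setT ft.
  apply: measurable_funM; last exact: measurable_indic.
  have := measurableT_comp (@measurable_powR R (- p)) maff.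
  exact.
have hftE y : ((ft y)%:E <= expq (2 - q) (a * y))%E.
  rewrite hfE /ft indicE; case: (boolP (0 < 1 - c * y)) => h.
    by rewrite mem_set // mulr1.
  by rewrite leey.
have mXG i : measurable (X i @^-1` Good) by apply: measurable_funPTI.
have mXB i : measurable (X i @^-1` ~` Good).
  by apply: measurable_funPTI; exact: measurableC.
have [hz|hpos] : P (X 0%N @^-1` ~` Good) = 0%E \/ (0 < P (X 0%N @^-1` ~` Good))%E.
  by have := measure_ge0 P (X 0%N @^-1` ~` Good); rewrite le_eqVlt => /predU1P [h|h];
    [left|right].
2: {
have hA : (\int[P]_w expq (2 - q) (a * X 0%N w) = +oo)%E.
  apply/eqP; rewrite eq_le leey /=.
  have -> : (+oo = \int[P]_w (+oo * (\1_(X 0%N @^-1` ~` Good) w)%:E))%E.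
    rewrite ge0_integralZl //.
    - by rewrite integral_indic // setIT gt0_mulye.
    - by apply/measurable_EFinP; exact: measurable_indic.
  apply: le_integral_nm => w.
    by apply: mule_ge0; rewrite ?leey ?lee_fin.
  rewrite hfE indicE; case: (boolP (0 < 1 - c * X 0%N w)) => h.
    by rewrite memNset ?mule0 ?lee_fin ?powR_ge0 //= => /(_ h).
  by rewrite mem_set ?leey //; exact/negP.
rewrite hA hg -(prednK hn) pinfty_expn muleC gt0_mulye ?leey //.
by apply: expe_gt0; rewrite lte_fin powR_gt0.
}
have hz' i : (i < n)%N -> P (X i @^-1` ~` Good) = 0%E.
  move=> hi; rewrite -hz; apply: hid => //; exact: measurableC.
have h1 i : (i < n)%N -> P (X i @^-1` Good) = 1%E.
  move=> hi; rewrite -[Good]setCK -preimage_setC probability_setC ?hz' ?sube0 //.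
pose Om := \bigcap_(i in [set i | (i < n)%N]) (X i @^-1` Good).
have mOm : measurable Om.
  by apply: bigcap_measurable; [exists 0%N|move=> i _; exact: mXG].
have POm : P Om = 1%E.
  rewrite /Om; etransitivity; first exact: (hind (fun=> Good) (fun=> mGood)).
  by apply: big1 => i _; exact: h1.
have PnOm : P (~` Om) = 0%E by rewrite probability_setC // POm subee.
pose S := fun w => n%:R^-1 * \sum_(k < n) X k w.
have mS : measurable_fun setT S.
  apply: measurable_funM; first exact: measurable_cst.
  by apply: measurable_sum => k; exact: measurable_funP.
pose E := [set w | x <= S w].
have mE : measurable E.
  suff -> : E = S @^-1` `[x, +oo[%classic.
    by rewrite -[X in measurable X]setTI; apply: mS => //; exact: measurable_itv.
  by apply/seteqP; split => w; rewrite /= in_itv /= andbT.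
rewrite -/S -/E.
have mEO : measurable (E `&` Om) by exact: measurableI.
have mnO : measurable (~` Om) by exact: measurableC.
apply: (@le_trans _ _ (P (E `&` Om))).
  apply: (@le_trans _ _ (P ((E `&` Om) `|` ~` Om))).
    apply: le_measure; rewrite ?inE //.
    - exact: measurableU.
    - by move=> w Ew; case: (pselect (Om w)) => h; [left|right].
  apply: (le_trans (measureU2 P mEO mnO)); rewrite le_eqVlt; apply/orP; left; apply/eqP.
  by rewrite -[RHS]adde0; congr (_ + _); exact: PnOm.
have -> : P (E `&` Om) = (\int[P]_w (\1_(E `&` Om) w)%:E)%E.
  by rewrite integral_indic // setIT.
apply: (@le_trans _ _
  (\int[P]_w (((1 - c * x) `^ p) ^+ n * \prod_(i < n) ft (X i w))%:E)%E).
  apply: le_integral_nm => w; first by rewrite lee_fin.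
  rewrite indicE; case: (boolP (w \in E `&` Om)) => hw; last first.
    by rewrite lee_fin mulr_ge0 ?exprn_ge0 ?powR_ge0 // prodr_ge0.
  move/set_mem: hw => [Ew Omw]; rewrite lee_fin.
  have -> : \prod_(i < n) ft (X i w) = \prod_(i < n) (1 - c * X i w) `^ (- p).
    apply: eq_bigr => i _; rewrite /ft indicE mem_set ?mulr1 //.
    exact: (Omw i (ltn_ord i)).
  apply: (@pointwise R n hn c x p hc hp hcx (fun i => X i w)) => // i.
  exact: (Omw i (ltn_ord i)).
have -> : (\int[P]_w (((1 - c * x) `^ p) ^+ n * \prod_(i < n) ft (X i w))%:E =
    (((1 - c * x) `^ p) ^+ n)%:E * \int[P]_w (\prod_(i < n) ft (X i w))%:E)%E.
  under eq_integral do rewrite EFinM.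
  apply: ge0_integralZl_EFin => //.
  - by move=> w _; rewrite lee_fin prodr_ge0.
  - apply/measurable_EFinP; apply: measurable_prod => i _.
    exact: measurableT_comp ftm (measurable_funP (X i)).
  - by rewrite exprn_ge0 ?powR_ge0.
rewrite hg -EFin_expe.
apply: lee_wpmul2l; first by rewrite lee_fin exprn_ge0 ?powR_ge0.
apply: le_trans (@prod_le _ _ _ _ _ hn _ hind hid _ ftm ft0) _.
apply: lee_expn; first by apply: integral_ge0 => w _; rewrite lee_fin.
apply: le_integral_nm => w; [by rewrite lee_fin | exact: hftE].
Qed.
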